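(* Let $X$ be a topological space possessing an infinite metrizable gauge, let $\kappa$ be a regular cardinal with $\kappa\in\mathrm{MG}(X)$, let $G\in\mathcal{G}_\kappa$ and $d\in\mathrm{Met}(X;G)$. Let $\mathcal{F}$ be a Cauchy filter on $(X,d)$ and let $l\colon\kappa^\dagger\to G$ be a g-characteristic isotone embedding. Then there exists a map $\mathfrak{B}\colon\kappa\to\mathcal{F}$ such that: (1) each $\mathfrak{B}(\alpha)$ is a clopen subset of $X$; (2) for all $\alpha<\kappa$ and all $x,y\in\mathfrak{B}(\alpha)$ we have $d(x,y)\le l(\alpha)$; (3) if $\alpha\le\beta<\kappa$ then $\mathfrak{B}(\alpha)\supseteq\mathfrak{B}(\beta)$.
   Context: A linearly ordered Abelian group is an Abelian group with a linear order compatible with addition. For $x,y\in G_{>0}$, $x\asymp y$ iff $y\le nx$ and $x\le my$ for some $n,m\in\mathbb{Z}_{\ge1}$; $\mathrm{Arc}(G)=G_{>0}/\asymp$, ordered by $[x]\preceq[y]$ iff ($nx<y$ for all $n$) or $x\asymp y$; $\mathrm{Arc}(G)^\perp$ is $\mathrm{Arc}(G)$ with a new least element adjoined. For a bottomed linearly ordered set $S$ (least element $\perp_S$, $S^*=S\setminus\{\perp_S\}$), $\chi(S)$ is the least cardinal $\kappa>0$ such that some strictly decreasing family $(s_\alpha)_{\alpha<\kappa}$ in $S^*$ has every $t\in S^*$ bounded below by some $s_\alpha$. A $G$-metric: $d\colon X^2\to G$, $d(x,y)=0\iff x=y$, $d\ge0$, symmetric, triangle inequality; $\mathrm{Met}(X;G)$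 is the set of $G$-metrics generating the topology of $X$ via open balls of radii in $G_{>0}$. $\mathrm{MG}(X)$: cardinals $\kappa$ with some $G$, $\chi(\mathrm{Arc}(G)^\perp)=\kappa$, $\mathrm{Met}(X;G)\ne\emptyset$; infinite metrizable gauge: some $\kappa\in\mathrm{MG}(X)$ with $\kappa\ge\omega_0$. $\mathcal{G}_\kappa$: groups with $\chi(\mathrm{Arc}(G)^\perp)=\kappa$. $\kappa^\dagger$ is the set $\kappa+1=\{\alpha:\alpha\le\kappa\}$ of ordinals with reversed order (least element $\kappa$). A map $l\colon\kappa^\dagger\to G$ is an isotone embedding if it is injective and order preserving for the order of $\kappa^\dagger$ (so $\alpha\le\beta$ as ordinals implies $l(\beta)\le l(\alpha)$); it is g-characteristic if its image $Q$ satisfies $Q\subseteq G_{\ge0}$, $0\in Q$, and every $s\in G_{>0}$ has some $t\in Q\setminus\{0\}$ with $t\le s$. A filter $\mathcal{F}$ on $X$ is Cauchy if for every $\epsilon\in G_{>0}$ some $F\in\mathcal F$ has $d(x,y)<\epsilon$ for all $x,y\in F$. *)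

(* Defs.v *)
From HB Require Import structures.
From mathcomp Require Import all_boot all_order all_algebra.
From mathcomp Require Import all_classical topology.
Set Implicit Arguments. Unset Strict Implicit. Unset Printing Implicit Defensive.
Import Order.TTheory GRing.Theory Num.Theory.
Local Open Scope classical_set_scope.
Local Open Scope ring_scope.

Definition is_loag (G : porderZmodType) : Prop :=
  (forall x y : G, (x <= y) || (y <= x)) /\
  (forall x y z : G, x <= y -> x + z <= y + z).

Definition arc_equiv (G : porderZmodType) (x y : G) : Prop :=
  exists n m : nat, (0 < n)%N /\ (0 < m)%N /\ y <= x *+ n /\ x <= y *+ m.

(* [x] ⪯ [y] in Arc(G) (for x, y in G_{>0}) *)
Definition arc_le (G : porderZmodType) (x y : G) : Prop :=
  (forall n : nat, (0 < n)%N -> x *+ n < y) \/ arc_equiv x y.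

Definition arc_lt (G : porderZmodType) (x y : G) : Prop :=
  arc_le x y /\ ~ arc_equiv x y.

Definition well_order (K : Type) (lt : K -> K -> Prop) : Prop :=
  (forall a, ~ lt a a) /\
  (forall a b c, lt a b -> lt b c -> lt a c) /\
  (forall a b, lt a b \/ a = b \/ lt b a) /\
  well_founded lt.

Definition card_le (A B : Type) : Prop := exists f : A -> B, injective f.

(* (K, lt) is an initial ordinal, i.e. (represents) a cardinal *)
Definition initial_ordinal (K : Type) (lt : K -> K -> Prop) : Prop :=
  well_order lt /\ forall a : K, ~ card_le K {b : K | lt b a}.

Definition infinite_type (K : Type) : Prop := card_le nat K.

Definition regular_cardinal (K : Type) (lt : K -> K -> Prop) : Prop :=
  initial_ordinal lt /\ infinite_type K /\
  forall C : K -> Prop, (forall a, exists b, C b /\ (a = b \/ lt a b)) ->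
    card_le K {b : K | C b}.

(* The elements of Arc(G)^⊥ \ {⊥} = Arc(G) are represented by elements of
   G_{>0}; a family indexed by the ordinal (J, ltJ) is strictly decreasing in
   Arc(G) and every element of Arc(G) is bounded below by a member. *)
Definition arc_coinitial_family (G : porderZmodType) (J : Type)
    (ltJ : J -> J -> Prop) (s : J -> G) : Prop :=
  (forall j, 0 < s j) /\
  (forall i j, ltJ i j -> arc_lt (s j) (s i)) /\
  (forall t : G, 0 < t -> exists j, arc_le (s j) t).

(* χ(Arc(G)^⊥) = κ, where κ is the cardinal represented by the initial
   ordinal (K, ltK): κ admits such a family, and no nonzero cardinal
   strictly smaller than κ does. *)
Definition chi_arc_eq (G : porderZmodType) (K : Type) (ltK : K -> K -> Prop)
  : Prop :=
  (exists s : K -> G, arc_coinitial_family ltK s) /\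
  forall (J : Type) (ltJ : J -> J -> Prop),
    initial_ordinal ltJ -> inhabited J -> card_le J K -> ~ card_le K J ->
    ~ (exists s : J -> G, arc_coinitial_family ltJ s).

Definition is_Gmetric (X : Type) (G : porderZmodType) (d : X -> X -> G)
  : Prop :=
  (forall x y, d x y = 0 <-> x = y) /\
  (forall x y, 0 <= d x y) /\
  (forall x y, d x y = d y x) /\
  (forall x y z, d x z <= d x y + d y z).

Definition in_Met (X : topologicalType) (G : porderZmodType)
    (d : X -> X -> G) : Prop :=
  is_Gmetric d /\
  forall U : set X, open U <->
    (forall x, U x -> exists e : G, 0 < e /\ [set y | d x y < e] `<=` U).

Definition in_MG (X : topologicalType) (K : Type) (ltK : K -> K -> Prop)
  : Prop :=
  exists G : porderZmodType, is_loag G /\ chi_arc_eq G ltK /\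
    exists d : X -> X -> G, in_Met d.

Definition has_infinite_metrizable_gauge (X : topologicalType) : Prop :=
  exists (K : Type) (ltK : K -> K -> Prop),
    initial_ordinal ltK /\ infinite_type K /\ in_MG X ltK.

Definition G_cauchy (X : Type) (G : porderZmodType) (d : X -> X -> G)
    (F : set_system X) : Prop :=
  forall e : G, 0 < e -> exists A, F A /\ forall x y, A x -> A y -> d x y < e.

(* Some a stands for the ordinal a < κ, None stands for κ itself.
   ord_le_dag a b  <->  a ≤ b as ordinals. *)
Definition ord_le_dag (K : Type) (ltK : K -> K -> Prop) (a b : option K)
  : Prop :=
  match a, b with
  | _, None => True
  | None, Some _ => False
  | Some a, Some b => a = b \/ ltK a b
  end.

(* isotone embedding κ^† -> G: injective and order preserving for the
   reversed order of κ^† *)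
Definition isotone_embedding (K : Type) (ltK : K -> K -> Prop)
    (G : porderZmodType) (l : option K -> G) : Prop :=
  injective l /\ forall a b, ord_le_dag ltK a b -> l b <= l a.

Definition g_characteristic (K : Type) (G : porderZmodType)
    (l : option K -> G) : Prop :=
  (forall a, 0 <= l a) /\
  (exists a, l a = 0) /\
  (forall s : G, 0 < s -> exists a, l a != 0 /\ l a <= s).

(* Main.v *)
Require Import Defs.
From HB Require Import structures.
From mathcomp Require Import all_boot all_order all_algebra.
From mathcomp Require Import all_classical topology.
Import Order.TTheory GRing.Theory Num.Theory.
Local Open Scope classical_set_scope.
Local Open Scope ring_scope.

Lemma loag_mono (G : porderZmodType) (hG : is_loag G) (x y : G) (n : nat) :
  x <= y -> x *+ n <= y *+ n.
Proof.
move=> xy; elim: n => [|n IH]; first by rewrite !mulr0n.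
rewrite !mulrS; apply: (le_trans (hG.2 _ _ (x *+ n) xy)).
by rewrite [y + _]addrC [y + y *+ n]addrC; apply: hG.2.
Qed.

Lemma loag_nle (G : porderZmodType) (hG : is_loag G) (x y : G) :
  ~ (x <= y) -> y < x.
Proof.
move=> nxy; have := hG.1 x y; rewrite (negbTE (introN idP nxy)) /= => yx.
rewrite lt_def yx andbT; apply/eqP => e; apply: nxy; by rewrite e.
Qed.

Lemma loag_nlt (G : porderZmodType) (hG : is_loag G) (x y : G) :
  ~ (x < y) -> y <= x.
Proof.
move=> nxy; case/orP: (hG.1 x y) => // xy; case: (eqVneq x y) => [->//|ne].
by exfalso; apply: nxy; rewrite lt_def eq_sym ne xy.
Qed.

Lemma infinitesimal (G : porderZmodType) (hG : is_loag G) (K : Type)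
  (ltK : K -> K -> Prop) (hGK : chi_arc_eq G ltK) (hinf : infinite_type K)
  (r : G) : 0 < r -> exists e : G, 0 < e /\ forall n, e *+ n < r.
Proof.
move=> r0; case: hinf => f finj.
have [[t [t0 nle]]|] := pselect (exists t : G, 0 < t /\ ~ arc_le r t); last first.
  move=> H; exfalso; apply: (hGK.2 unit (fun _ _ => False)).
  - split; last by move=> a [g gi]; case: (g tt).
    split; first by move=> *.
    split; first by move=> *.
    split; first by move=> [] []; right; left.
    by move=> a; constructor.
  - by constructor.
  - by exists (fun _ => f 0%N) => a b _; case: a; case: b.
  - move=> [g gi]; have := finj 0%N 1%N; have -> : f 0%N = f 1%N.
      by apply: gi; case: (g (f 0%N)); case: (g (f 1%N)).
    by move=> /(_ erefl).
  - exists (fun _ => r); split; first by [].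
    split; first by [].
    move=> t t0; exists tt; apply: contrapT => nle; apply: H; by exists t.
exists t; split => // n.
apply: contrapT => h; have rtn := @loag_nlt _ hG _ _ h.
have n0 : (0 < n)%N.
  case: n {h} rtn => // ; rewrite mulr0n => h.
  by have := lt_le_trans r0 h; rewrite ltxx.
apply: (nle); left => m m0; apply: (@loag_nle _ hG) => tle.
apply: (nle); right; exists m, n; do !split => //.
Qed.

Theorem lemma2p58 (X : topologicalType)
  (hX : has_infinite_metrizable_gauge X)
  (K : Type) (ltK : K -> K -> Prop)
  (hK : regular_cardinal ltK) (hKMG : in_MG X ltK)
  (G : porderZmodType) (hG : is_loag G) (hGK : chi_arc_eq G ltK)
  (d : X -> X -> G) (hd : in_Met d)
  (F : set_system X) (hF : ProperFilter F) (hFc : G_cauchy d F)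
  (l : option K -> G) (hl : isotone_embedding ltK l)
  (hlc : g_characteristic l) :
  exists B : K -> set X,
    (forall a, F (B a)) /\
    (forall a, open (B a) /\ closed (B a)) /\
    (forall a x y, B a x -> B a y -> d x y <= l (Some a)) /\
    (forall a b, (a = b \/ ltK a b) -> B b `<=` B a).
Proof.
have hinf : infinite_type K by case: hK => _ [].
case: hd => [[d0 [dge0 [dsym dtri]]] hopen].
case: hl => linj lmono; case: hlc => [lge0 [[a0 la0] lsmall]].
have lN : l None = 0.
  by apply: le_anti; rewrite lge0 andbT -la0; apply: lmono; case: a0 {la0}.
have lpos : forall a, 0 < l (Some a).
  move=> a; rewrite lt_def lge0 andbT -lN; apply/eqP => /linj; done.
pose R (r : G) (x y : X) := forall n, d x y *+ n < r.
have Rrefl : forall r x, 0 < r -> R r x x.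
  by move=> r x r0 n; rewrite (proj2 (d0 x x) erefl) mul0rn.
have Rsym : forall r x y, R r x y -> R r y x by move=> r x y h n; rewrite dsym.
have Rtrans : forall r x y z, R r x y -> R r y z -> R r x z.
  move=> r x y z h1 h2 n.
  have key : forall a b : G, a <= b -> (forall m, b *+ m < r) -> (a + b) *+ n < r.
    move=> a b ab hb; apply: le_lt_trans (hb (n * 2)%N).
    rewrite mulnC mulrnA; apply: (@loag_mono _ hG); rewrite mulr2n; exact: hG.2.
  apply: le_lt_trans (_ : (d x y + d y z) *+ n < r).
    exact: (@loag_mono _ hG).
  case/orP: (hG.1 (d x y) (d y z)) => h; first exact: key.
  by rewrite addrC; apply: key.
have Rmono : forall r s x y, r <= s -> R r x y -> R s x y.
  by move=> r s x y rs h n; apply: lt_le_trans rs.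
have Rsmall : forall r e x y, (forall n, e *+ n < r) -> d x y < e -> R r x y.
  move=> r e x y he dxy n; apply: le_lt_trans (he n).
  by apply: (@loag_mono _ hG); apply: ltW.
have /choice [eps heps] : forall a : K, exists e : G, 0 < e /\ forall n, e *+ n < l (Some a).
  by move=> a; apply: (@infinitesimal _ hG _ _ hGK hinf); apply: lpos.
have /choice [A hA] : forall a : K, exists A, F A /\ forall x y, A x -> A y -> d x y < eps a.
  by move=> a; apply: hFc; exact: (heps a).1.
pose B a := [set x | exists2 y, A a y & R (l (Some a)) y x].
have BF : forall a, F (B a).
  move=> a; apply: filterS (hA a).1 => x Ax; exists x => //; exact: Rrefl.
have Bopen : forall a, open (B a).
  move=> a; apply/hopen => x [y Ay Ryx]; exists (eps a); split; first exact: (heps a).1.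
  move=> w /= dxw; exists y => //; apply: (Rtrans _ _ _ _ Ryx); exact: (Rsmall _ _ _ _ (heps a).2) dxw.
exists B; split => //; split.
  move=> a; split => //; rewrite -[B a]setCK; apply: open_closedC.
  apply/hopen => x nBx; exists (eps a); split; first exact: (heps a).1.
  move=> w /= dxw [y Ay Ryw]; apply: nBx; exists y => //.
  apply: (Rtrans _ _ _ _ Ryw); apply: (Rsym); exact: (Rsmall _ _ _ _ (heps a).2) dxw.
split.
  move=> a x y [x' Ax' Rx] [y' Ay' Ry].
  have Rxy : R (l (Some a)) x y.
    apply: (Rtrans _ _ _ _ (Rsym _ _ _ Rx)); apply: (Rtrans _ _ _ _ _ Ry).
    exact: (Rsmall _ _ _ _ (heps a).2) ((hA a).2 _ _ Ax' Ay').
  by apply: ltW; have := Rxy 1%N; rewrite mulr1n.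
move=> a b ab x [y Ay Ryx].
have lba : l (Some b) <= l (Some a) by apply: lmono.
have [z [[ya Aya Rz] [yb Ayb Rzb]]] := filter_ex (filterI (BF a) (BF b)).
exists ya => //; apply: (Rtrans _ _ _ _ Rz); apply: (Rmono _ _ _ _ lba).
apply: (Rtrans _ _ _ _ (Rsym _ _ _ Rzb)); apply: (Rtrans _ _ _ _ _ Ryx).
exact: (Rsmall _ _ _ _ (heps b).2) ((hA b).2 _ _ Ayb Ay).
Qed.
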